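(* Let $p,m\ge1$ be integers with $p+\frac m2>1$. Then the minimal operator $\mathbb{H}$ generated by the generalized Heun operator $H^{p,m}$ in $\mathbb{B}_p$ is completely indeterminate: its deficiency indices satisfy $n_+(\mathbb{H})=n_-(\mathbb{H})=m$.
   Context: $\mathbb{B}$ is the Bargmann space of entire functions $\varphi$ with $\frac1\pi\int_{\mathbb{C}}|\varphi|^2e^{-|z|^2}dxdy<\infty$, orthonormal basis $e_k(z)=z^k/\sqrt{k!}$. Annihilation and creation operators: $A\varphi=\varphi'$, $A^*\varphi=z\varphi$. The generalized Heun operator is $H^{p,m}=A^{*p}(A^m+A^{*m})A^p$, i.e. $H^{p,m}\varphi=z^p\varphi^{(p+m)}+z^{p+m}\varphi^{(p)}$; on the basis: $H^{p,m}e_k=0$ for $k<p$; $H^{p,m}e_k=\frac{\sqrt{k!(k+m)!}}{(k-p)!}e_{k+m}$ for $p\le k<p+m$; $H^{p,m}e_k=\frac{\sqrt{k!(k-m)!}}{(k-p-m)!}e_{k-m}+\frac{\sqrt{k!(k+m)!}}{(k-p)!}e_{k+m}$ for $k\ge p+m$. $\mathbb{B}_p=\{\varphi\in\mathbb{B}:\varphi(0)=\varphi'(0)=\dots=\varphi^{(p-1)}(0)=0\}$, the closed span of $\{e_k\}_{k\ge p}$. $\mathbb{H}$ is the closure in $\mathbb{B}_p$ of the restriction of $H^{p,m}$ to polynomials lying in $\mathbb{B}_p$; it is a closed symmetric operator. Deficiency indices: $n_\pm(\mathbb{H})=\dim\ker(\mathbb{H}^*\mp iI)$. A closed symmetric operator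 whose block Jacobi matrix has $m\times m$ blocks is called completely indeterminate if $n_+=n_-=m$. *)

(* Defs.v *)
From HB Require Import structures.
From mathcomp Require Import all_boot all_order all_algebra.
From mathcomp Require Import complex.
From mathcomp Require Import all_classical all_reals all_analysis.
From mathcomp Require Import Rstruct Rstruct_topology.
Set Implicit Arguments. Unset Strict Implicit. Unset Printing Implicit Defensive.
Import Order.TTheory GRing.Theory Num.Theory.
Local Open Scope ring_scope.
Local Open Scope complex_scope.

Notation Cx := (Rdefinitions.R[i]).

(* Vectors of B_p are represented by their coordinate sequences in the
   orthonormal basis e_k = z^k / sqrt(k!) of the Bargmann space:
   phi = sum_k x k * e_k.  The map phi |-> (x k)_k is the unitary
   isomorphism B ~ l^2(N). *)
Definition cseq := nat -> Cx.

Definition sqmod (z : Cx) : Rdefinitions.R := (complex.Re z) ^+ 2 + (complex.Im z) ^+ 2.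

Definition in_l2 (x : cseq) : Prop :=
  cvgn (series (fun k => sqmod (x k))).

(* x corresponds to an element of B_p = closed span {e_k : k >= p} *)
Definition in_Bp (p : nat) (x : cseq) : Prop :=
  in_l2 x /\ forall k, (k < p)%N -> x k = 0.

(* x corresponds to a polynomial (finitely many nonzero coordinates)
   lying in B_p; its coordinates vanish from index N on. *)
Definition poly_Bp (p N : nat) (x : cseq) : Prop :=
  (forall k, (k < p)%N -> x k = 0) /\ (forall k, (N <= k)%N -> x k = 0).

(* Coefficients of H^{p,m} on the basis:
   H e_k = hdown k e_{k-m} + hup k e_{k+m}  with
   hup k   = sqrt(k! (k+m)!) / (k-p)!      for k >= p      (0 otherwise),
   hdown k = sqrt(k! (k-m)!) / (k-p-m)!    for k >= p + m  (0 otherwise). *)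
Definition hup (p m k : nat) : Rdefinitions.R :=
  if (p <= k)%N then Num.sqrt ((k`! * (k + m)`!)%N%:R) / ((k - p)`!)%N%:R else 0.

Definition hdown (p m k : nat) : Rdefinitions.R :=
  if (p + m <= k)%N then Num.sqrt ((k`! * (k - m)`!)%N%:R) / ((k - p - m)`!)%N%:R
  else 0.

Definition Heun (p m : nat) (x : cseq) : cseq := fun j =>
  (if (m <= j)%N then (hup p m (j - m)%N)%:C * x (j - m)%N else 0)
  + (hdown p m (j + m)%N)%:C * x (j + m)%N.

Definition fdot (N : nat) (u v : cseq) : Cx :=
  \sum_(k < N) u k * (v k)^*.

(* Graph of the adjoint H* of the minimal operator (the closure in B_p of
   H^{p,m} restricted to the polynomials in B_p).  The adjoint of a densely
   defined operator coincides with the adjoint of its closure, so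
   (y, z) is in the graph of H* iff y, z are in B_p and
   <H x, y> = <x, z> for every polynomial x in B_p.  If x vanishes from
   index N on, then x and H x vanish from index N + m on, so both inner
   products are the finite sums below. *)
Definition adj_graph (p m : nat) (y z : cseq) : Prop :=
  in_Bp p y /\ in_Bp p z /\
  forall (N : nat) (x : cseq), poly_Bp p N x ->
    fdot (N + m)%N (Heun p m x) y = fdot (N + m)%N x z.

Definition adj_eigenspace (p m : nat) (lambda : Cx) : set cseq :=
  [set y | adj_graph p m y (fun k => lambda * y k)].

Definition has_dim (K : set cseq) (d : nat) : Prop :=
  exists v : 'I_d -> cseq,
    (forall i, K (v i)) /\
    (forall c : 'I_d -> Cx,
        (forall k, \sum_(i < d) c i * v i k = 0) -> forall i, c i = 0) /\
    (forall y, K y -> exists c : 'I_d -> Cx,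
        forall k, y k = \sum_(i < d) c i * v i k).

Definition n_plus (p m d : nat) : Prop := has_dim (adj_eigenspace p m 'i) d.
Definition n_minus (p m d : nat) : Prop := has_dim (adj_eigenspace p m (- 'i)) d.

(* Main.v *)
Require Import Defs.
From HB Require Import structures.
From mathcomp Require Import all_boot all_order all_algebra.
From mathcomp Require Import complex.
From mathcomp Require Import all_classical all_reals all_analysis.
From mathcomp Require Import Rstruct Rstruct_topology.
From mathcomp Require Import ring lra zify.
From Stdlib Require Import Lia.
Import Order.TTheory GRing.Theory Num.Theory.
Local Open Scope ring_scope.
Notation RR := Rdefinitions.R.


Definition r4 (n : nat) : RR := Num.sqrt (Num.sqrt n%:R).

Lemma r4_ge0 n : 0 <= r4 n.
Proof. exact: sqrtr_ge0. Qed.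

Lemma r4_pow n : r4 n ^+ 4 = n%:R.
Proof.
have -> : (4 = 2 * 2)%N by [].
rewrite exprM sqr_sqrtr ?sqrtr_ge0 // sqr_sqrtr //.
Qed.

Lemma r4_gt0 n : (1 <= n)%N -> 0 < r4 n.
Proof.
move=> hn; rewrite /r4 !sqrtr_gt0 ltr0n; lia.
Qed.

Lemma amgm4 (x y : RR) : 0 <= x -> 0 <= y -> 4 * x^+3 * y <= 3 * x^+4 + y^+4.
Proof.
move=> hx hy.
have h : 0 <= (y - x)^+2 * (y^+2 + 2 * x * y + 3 * x^+2).
  apply: mulr_ge0; first exact: sqr_ge0.
  nra.
nra.
Qed.

Lemma r4_le n k : (n <= k)%N -> r4 n <= r4 k.
Proof.
move=> h; rewrite /r4 ler_sqrt ?sqrtr_gt0 ?sqrtr_ge0 //.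
  by rewrite ler_sqrt ?ler_nat.
Qed.

Definition V (n : nat) : RR := (n%:R * r4 n)^-1.

Lemma V_gt0 n : (1 <= n)%N -> 0 < V n.
Proof. move=> h; rewrite /V invr_gt0 mulr_gt0 ?r4_gt0 // ltr0n; lia. Qed.

Lemma core_real (x y : RR) : 0 <= x -> 0 <= y -> y ^+ 4 = x ^+ 4 + 2 ->
  2 * x ^+ 4 * y <= (2 * x ^+ 4 + 1) * x.
Proof.
move=> hx hy e.
have h := @amgm4 _ _ hx hy.
have h2 : x * (4 * x ^+ 3 * y) <= x * (3 * x ^+ 4 + y ^+ 4) by apply: ler_wpM2l.
have e3 : x * y ^+ 4 = x * x ^+ 4 + 2 * x by rewrite e; ring.
have e4 : x * (4 * x ^+ 3 * y) = 4 * (x ^+ 4 * y) by ring.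
have e5 : x * (3 * x ^+ 4 + y ^+ 4) = 3 * (x * x ^+ 4) + x * y ^+ 4 by ring.
have e6 : (2 * x ^+ 4 + 1) * x = 2 * (x * x ^+ 4) + x by ring.
rewrite e6 -mulrA; rewrite e4 e5 e3 in h2; lra.
Qed.

Lemma core_step n : 2 * n%:R * r4 (n + 2)%N <= (2 * n%:R + 1) * r4 n.
Proof.
rewrite -(r4_pow n); apply: core_real; rewrite ?r4_ge0 // !r4_pow natrD //.
Qed.

Lemma V_step n : (1 <= n)%N ->
  2 * n%:R ^+ 2 * V n <= (n%:R + 2) * (2 * n%:R + 1) * V (n + 2)%N.
Proof.
move=> hn.
have hx := r4_gt0 n hn.
have hy : 0 < r4 (n + 2)%N by apply: r4_gt0; lia.
have hn0 : (0 : RR) < n%:R by rewrite ltr0n; lia.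
have h := core_step n.
rewrite /V natrD.
have -> : 2 * n%:R ^+ 2 * (n%:R * r4 n)^-1 = 2 * n%:R / r4 n :> RR.
  by field; apply/andP; split; apply: lt0r_neq0.
have -> : (n%:R + 2) * (2 * n%:R + 1) * ((n%:R + 2) * r4 (n + 2)%N)^-1
   = (2 * n%:R + 1) / r4 (n + 2)%N :> RR.
  by field; apply/andP; split; apply: lt0r_neq0 => //; lra.
rewrite ler_pdivrMr // mulrAC ler_pdivlMr //.
Qed.

Lemma tele_real (x y : RR) : 0 < x -> 0 < y -> y ^+ 4 = x ^+ 4 + 1 ->
  (y ^+ 4 * y)^-1 <= 4 * (x^-1 - y^-1).
Proof.
move=> hx hy e.
have hxy : x <= y.
  rewrite leNgt; apply/negP => hlt.
  have : y ^+ 4 < x ^+ 4 by rewrite (ltrXn2r 4 (ltW hy) hlt).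
  lra.
have h1 : 1 <= 4 * y ^+ 3 * (y - x).
  have E : (y - x) * (y ^+ 3 + y ^+ 2 * x + y * x ^+ 2 + x ^+ 3) = y ^+ 4 - x ^+ 4 by ring.
  have a1 : y ^+ 2 * x <= y ^+ 3.
    by have := ler_wpM2l (exprn_ge0 2 (ltW hy)) hxy; rewrite -exprSr.
  have a2 : y * x ^+ 2 <= y ^+ 3.
    have b : x ^+ 2 <= y ^+ 2 by apply: lerXn2r; rewrite ?nnegrE ?(ltW hx) ?(ltW hy).
    by have := ler_wpM2l (ltW hy) b; rewrite -exprS.
  have a3 : x ^+ 3 <= y ^+ 3 by apply: lerXn2r; rewrite ?nnegrE ?(ltW hx) ?(ltW hy).
  have le : (y - x) * (y ^+ 3 + y ^+ 2 * x + y * x ^+ 2 + x ^+ 3) <= (y - x) * (4 * y ^+ 3).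
    apply: ler_wpM2l; lra.
  have E2 : (y - x) * (4 * y ^+ 3) = 4 * y ^+ 3 * (y - x) by ring.
  rewrite E e E2 in le; lra.
have -> : x^-1 - y^-1 = (y - x) / (x * y) by field; apply/andP; split; apply: lt0r_neq0.
have hpos : 0 < y ^+ 4 * y by rewrite mulr_gt0 // exprn_gt0.
rewrite -[_^-1]mul1r ler_pdivrMr //.
have -> : 4 * ((y - x) / (x * y)) * (y ^+ 4 * y) = 4 * y ^+ 3 * (y - x) * y / x.
  by field; apply/andP; split; apply: lt0r_neq0.
rewrite ler_pdivlMr // mul1r.
have : y <= 4 * y ^+ 3 * (y - x) * y by rewrite -[X in X <= _]mul1r ler_wpM2r // ltW.
lra.
Qed.

Lemma V_tele n : (1 <= n)%N -> V (n + 1)%N <= 4 * ((r4 n)^-1 - (r4 (n + 1)%N)^-1).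
Proof.
move=> hn.
rewrite /V -(r4_pow (n + 1)%N).
apply: tele_real; rewrite ?r4_gt0 //; try lia.
by rewrite !r4_pow natrD.
Qed.

Lemma series_nd (c : nat -> RR) : (forall n, 0 <= c n) -> nondecreasing_seq (series c).
Proof.
move=> hc; apply/nondecreasing_seqP => n; rewrite seriesSr; rewrite lerDl; exact: hc.
Qed.

Lemma summable_cmp (c : nat -> RR) (C : RR) (K : nat) :
  (forall n, 0 <= c n) -> (1 <= K)%N -> 0 <= C ->
  (forall n, (K <= n)%N -> c n <= C * V n) -> cvgn (series c).
Proof.
move=> hc hK hC hb.
have tel : forall N, series c (K.+1 + N)%N <=
    series c K.+1 + 4 * C * ((r4 K)^-1 - (r4 (K + N)%N)^-1).
  elim=> [|N IH]; first by rewrite !addn0 subrr mulr0 addr0.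
  rewrite addnS seriesSr.
  have h1 : c (K + N + 1)%N <= C * V (K + N + 1)%N by apply: hb; lia.
  have h2 : V (K + N + 1)%N <= 4 * ((r4 (K + N)%N)^-1 - (r4 (K + N + 1)%N)^-1) by apply: V_tele; lia.
  have e : (K.+1 + N = K + N + 1)%N by lia.
  have e2 : (K + N.+1 = K + N + 1)%N by lia.
  rewrite e e2.
  have h3 : C * V (K + N + 1)%N <= C * (4 * ((r4 (K + N)%N)^-1 - (r4 (K + N + 1)%N)^-1)).
    exact: ler_wpM2l.
  rewrite e in IH.
  lra.
apply: nondecreasing_is_cvgn; first exact: series_nd.
exists (series c K.+1 + 4 * C * (r4 K)^-1) => _ [N _ <-].
have hr : 0 <= (r4 K)^-1 - (r4 K)^-1 by rewrite subrr.
have hpos : forall j, 0 <= (r4 j)^-1 by move=> j; rewrite invr_ge0 r4_ge0.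
have h4C : 0 <= 4 * C by lra.
case: (leqP N K.+1) => hN.
  apply: le_trans (@series_nd c hc N K.+1 hN) _.
  rewrite lerDl; apply: mulr_ge0 => //.
have -> : N = (K.+1 + (N - K.+1))%N by lia.
apply: le_trans (tel _) _.
rewrite lerD2l; apply: ler_wpM2l => //.
rewrite lerBlDr lerDl //.
Qed.


Lemma compare (c W : nat -> RR) (m K : nat) : (1 <= m)%N ->
  (forall n, 0 <= c n) -> (forall n, (K <= n)%N -> 0 < W n) ->
  (forall n, (K + 2 * m <= n)%N -> exists a b : RR, 0 <= a /\ 0 <= b /\
      c n <= a * c (n - 2 * m)%N + b * c (n - m)%N /\
      a * W (n - 2 * m)%N + b * W (n - m)%N <= W n) ->
  exists C, 0 <= C /\ forall n, (K <= n)%N -> c n <= C * W n.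
Proof.
move=> hm hc hW hrec.
pose F (i : nat) : RR := if (K <= i)%N then c i / W i else 0.
have hF : forall i, 0 <= F i.
  move=> i; rewrite /F; case: ifP => // hi.
  by apply: divr_ge0 => //; apply: ltW; apply: hW.
pose C := \sum_(i < K + 2 * m) F i.
have hC : 0 <= C by apply: sumr_ge0 => i _.
exists C; split => //.
suff H : forall N n, (n < N)%N -> (K <= n)%N -> c n <= C * W n.
  by move=> n hn; apply: (H n.+1).
elim=> [//|N IH] n hn hKn.
case: (ltnP n (K + 2 * m)) => hn2.
  have hWn := hW n hKn.
  have e : c n = F n * W n by rewrite /F hKn divfK //; apply: lt0r_neq0.
  rewrite e; apply: ler_wpM2r; first exact: ltW.
  rewrite /C (bigD1 (Ordinal hn2)) //= lerDl; apply: sumr_ge0 => i _; exact: hF.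
have [a [b [ha [hb [h1 h2]]]]] := hrec n hn2.
have i1 : c (n - 2 * m)%N <= C * W (n - 2 * m)%N by apply: IH; lia.
have i2 : c (n - m)%N <= C * W (n - m)%N by apply: IH; lia.
apply: le_trans h1 _.
apply: le_trans (_ : a * (C * W (n - 2 * m)%N) + b * (C * W (n - m)%N) <= _).
  by apply: lerD; apply: ler_wpM2l.
have -> : a * (C * W (n - 2 * m)%N) + b * (C * W (n - m)%N)
   = C * (a * W (n - 2 * m)%N + b * W (n - m)%N) by ring.
exact: ler_wpM2l.
Qed.


Lemma P2 (A : RR) : 12 <= A ->
  4 * A * (A - 1) ^+ 2 * (2 * A - 3) <= 2 * (4 * A - 1) * (A - 2) ^+ 2 * (A + 1).
Proof.
move=> h.
have e : 2 * (4 * A - 1) * (A - 2) ^+ 2 * (A + 1) - 4 * A * (A - 1) ^+ 2 * (2 * A - 3)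
  = 2 * (A - 12) ^+ 3 + 46 * (A - 12) ^+ 2 + 284 * (A - 12) + 232 by ring.
rewrite -subr_ge0 e.
have t0 : 0 <= A - 12 by lra.
have t2 : 0 <= (A - 12) ^+ 2 by apply: exprn_ge0.
have t3 : 0 <= (A - 12) ^+ 3 by apply: exprn_ge0.
lra.
Qed.

Lemma P3 (A s : RR) : 2 <= A -> A <= s ->
  (A - 2) ^+ 2 * (s * (2 * s - 3)) <= (s - 2) ^+ 2 * (A * (2 * A - 3)).
Proof.
move=> h1 h2.
have h : 0 <= (s - A) * ((5 * A - 8) * (s - A) + (5 * A - 6) * (A - 2)).
  apply: mulr_ge0; first lra.
  apply: addr_ge0; apply: mulr_ge0; lra.
have e : (s - 2) ^+ 2 * (A * (2 * A - 3)) - (A - 2) ^+ 2 * (s * (2 * s - 3))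
   = (s - A) * ((5 * A - 8) * (s - A) + (5 * A - 6) * (A - 2)) by ring.
rewrite -subr_ge0 e //.
Qed.

Lemma P1 (A P M : RR) : 0 <= P -> P <= A - 1 -> 1 <= M ->
  P ^+ 2 * (A + 1) <= (A - 1) ^+ 2 * (A + M).
Proof.
move=> h1 h2 h3.
apply: ler_pM; [exact: sqr_ge0 | lra | | lra].
apply: lerXn2r; rewrite ?nnegrE //; lra.
Qed.

Lemma Pcomb (A P M s : RR) : 12 <= A -> A <= s -> 0 <= P -> P <= A - 1 -> 1 <= M ->
  P ^+ 2 * (s * (2 * s - 3)) * (4 * A) <= (4 * A - 1) * (2 * (s - 2) ^+ 2) * (A * (A + M)).
Proof.
move=> hA hs hP hPA hM.
have hQ : 0 < (A + 1) * (A - 2) ^+ 2 by apply: mulr_gt0; [lra | apply: exprn_gt0; lra].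
rewrite -(ler_pM2r hQ).
have h1 := @P1 A P M hP hPA hM.
have h3 : (A - 2) ^+ 2 * (s * (2 * s - 3)) <= (s - 2) ^+ 2 * (A * (2 * A - 3)) by apply: P3; lra.
have h2 := @P2 A hA.
have X0 : 0 <= P ^+ 2 * (A + 1) by apply: mulr_ge0; [exact: sqr_ge0 | lra].
have Y0 : 0 <= (A - 2) ^+ 2 * (s * (2 * s - 3)) by apply: mulr_ge0; [exact: sqr_ge0 | apply: mulr_ge0; lra].
have s1 : (P ^+ 2 * (A + 1)) * ((A - 2) ^+ 2 * (s * (2 * s - 3)))
    <= ((A - 1) ^+ 2 * (A + M)) * ((s - 2) ^+ 2 * (A * (2 * A - 3))) by exact: ler_pM X0 Y0 h1 h3.
have s2 : (P ^+ 2 * (A + 1)) * ((A - 2) ^+ 2 * (s * (2 * s - 3))) * (4 * A)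
    <= ((A - 1) ^+ 2 * (A + M)) * ((s - 2) ^+ 2 * (A * (2 * A - 3))) * (4 * A).
  by apply: ler_wpM2r => //; lra.
have W0 : 0 <= (A + M) * (s - 2) ^+ 2 * A by apply: mulr_ge0; [apply: mulr_ge0; [lra|exact: sqr_ge0] | lra].
have s3 : ((A + M) * (s - 2) ^+ 2 * A) * (4 * A * (A - 1) ^+ 2 * (2 * A - 3))
   <= ((A + M) * (s - 2) ^+ 2 * A) * (2 * (4 * A - 1) * (A - 2) ^+ 2 * (A + 1)).
  exact: ler_wpM2l.
have e1 : P ^+ 2 * (s * (2 * s - 3)) * (4 * A) * ((A + 1) * (A - 2) ^+ 2)
   = (P ^+ 2 * (A + 1)) * ((A - 2) ^+ 2 * (s * (2 * s - 3))) * (4 * A) by ring.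
have e2 : ((A - 1) ^+ 2 * (A + M)) * ((s - 2) ^+ 2 * (A * (2 * A - 3))) * (4 * A)
   = ((A + M) * (s - 2) ^+ 2 * A) * (4 * A * (A - 1) ^+ 2 * (2 * A - 3)) by ring.
have e3 : (4 * A - 1) * (2 * (s - 2) ^+ 2) * (A * (A + M)) * ((A + 1) * (A - 2) ^+ 2)
   = ((A + M) * (s - 2) ^+ 2 * A) * (2 * (4 * A - 1) * (A - 2) ^+ 2 * (A + 1)) by ring.
rewrite e1 e3; rewrite e2 in s2; exact: le_trans s2 s3.
Qed.


Definition U (p m k : nat) : RR := (k`! * (k + m)`!)%N%:R / (((k - p)`!)%N%:R ^+ 2).

Lemma U_gt0 p m k : 0 < U p m k.
Proof.
rewrite /U divr_gt0 // ?exprn_gt0 // ltr0n ?muln_gt0 ?fact_gt0 //.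
Qed.

Lemma U_step p m b : (p <= b)%N ->
  U p m b * ((b.+1)%:R * (b.+1 + m)%N%:R) = ((b.+1 - p)%N%:R) ^+ 2 * U p m b.+1.
Proof.
move=> hb.
have e1 : (b.+1 - p = (b - p).+1)%N by lia.
have e2 : (b.+1 + m = (b + m).+1)%N by lia.
rewrite /U e1 e2 !factS.
have f1 : ((b - p)`!)%N%:R != (0 : RR) by rewrite pnatr_eq0 -lt0n fact_gt0.
have f2 : ((b - p).+1)%:R != (0 : RR) by rewrite pnatr_eq0.
rewrite !natrM.
field.
by rewrite f1 addrC natr1 f2.
Qed.

Lemma step_UV p m b n : (1 <= p)%N -> (1 <= m)%N -> (p <= b)%N -> (11 <= b)%N ->
  (b <= n + 1)%N ->
  U p m b * V n <= (1 - (4 * (b.+1)%:R)^-1) * (U p m b.+1 * V (n + 2)%N).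
Proof.
move=> hp hm hpb hb hbn.
have hn : (1 <= n)%N by lia.
have e := @U_step p m b hpb.
have hv := @V_step n hn.
set A : RR := (b.+1)%:R.
set M : RR := m%:R.
set P : RR := (b.+1 - p)%N%:R.
set N : RR := n%:R.
have eAm : (b.+1 + m)%N%:R = A + M :> RR by rewrite natrD.
rewrite eAm -/A -/P in e.
have hA : 12 <= A by rewrite /A ler_nat; lia.
have hM : 1 <= M by rewrite /M ler1n.
have hP0 : 0 <= P by apply: ler0n.
have hPA : P <= A - 1.
  have h : ((b.+1 - p)%N%:R + 1 <= (b.+1)%:R :> RR) by rewrite natr1 ler_nat; lia.
  rewrite /P /A; lra.
have hN1 : 1 <= N by rewrite /N ler1n.
have hAs : A <= N + 2.
  rewrite /A /N -natr1.
  have : (b%:R : RR) <= n%:R + 1 by rewrite natr1 ler_nat; lia.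
  lra.
have hc := @Pcomb A P M (N + 2) hA hAs hP0 hPA hM.
have e1 : (N + 2) * (2 * (N + 2) - 3) = (N + 2) * (2 * N + 1) by ring.
have e2 : (N + 2 - 2) ^+ 2 = N ^+ 2 by ring.
rewrite e1 e2 in hc.
have e3 : (n + 2)%N%:R = N + 2 :> RR by rewrite natrD.
rewrite -/N in hv.
rewrite -/N.
set X := U p m b in e *; set Y := U p m b.+1 in e *.
set v := V n in hv *; set w := V (n + 2)%N in hv *.
have hX : 0 <= X by apply: ltW; apply: U_gt0.
have hY : 0 <= Y by apply: ltW; apply: U_gt0.
have hv0 : 0 <= v by apply: ltW; apply: V_gt0.
have hw0 : 0 <= w by apply: ltW; apply: V_gt0; lia.
have hD : 0 < 4 * A * (A * (A + M)) * (2 * N ^+ 2).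
  apply: mulr_gt0; [apply: mulr_gt0; [lra | apply: mulr_gt0; lra] | ].
  apply: mulr_gt0; [lra | apply: exprn_gt0; lra].
rewrite -(ler_pM2r hD).
have E1 : X * v * (4 * A * (A * (A + M)) * (2 * N ^+ 2))
   = (4 * A * (X * (A * (A + M)))) * (2 * N ^+ 2 * v) by ring.
rewrite E1 e.
have S1 : (4 * A * (P ^+ 2 * Y)) * (2 * N ^+ 2 * v)
   <= (4 * A * (P ^+ 2 * Y)) * ((N + 2) * (2 * N + 1) * w).
  apply: ler_wpM2l => //; apply: mulr_ge0; first lra.
  apply: mulr_ge0 => //; exact: sqr_ge0.
apply: le_trans S1 _.
have E2 : (4 * A * (P ^+ 2 * Y)) * ((N + 2) * (2 * N + 1) * w)
   = (Y * w) * (P ^+ 2 * ((N + 2) * (2 * N + 1)) * (4 * A)) by ring.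
have E3 : (1 - (4 * A)^-1) * (Y * w) * (4 * A * (A * (A + M)) * (2 * N ^+ 2))
   = (Y * w) * ((4 * A - 1) * (2 * N ^+ 2) * (A * (A + M))).
  field; apply: lt0r_neq0; lra.
rewrite E2 E3; apply: ler_wpM2l => //; exact: mulr_ge0.
Qed.

Lemma chain p m k : (1 <= p)%N -> (1 <= m)%N -> (p + m + 12 <= k)%N ->
  U p m (k - m)%N * V (k - m)%N <= (1 - (4 * k%:R)^-1) * (U p m k * V (k + m)%N).
Proof.
move=> hp hm hk.
have hth : 0 <= 1 - (4 * k%:R)^-1 :> RR.
  rewrite subr_ge0 invf_le1 ?mulr_gt0 ?ltr0n //; try lia.
  have : (1 : RR) <= k%:R by rewrite ler1n; lia.
  lra.
have H : forall i, (i < m)%N ->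
    U p m (k - i.+1)%N * V (k + m - 2 * i.+1)%N <= (1 - (4 * k%:R)^-1) * (U p m k * V (k + m)%N).
  elim=> [|i IH] hi.
    have h := @step_UV p m (k - 1)%N (k + m - 2)%N hp hm ltac:(lia) ltac:(lia) ltac:(lia).
    have e1 : (k - 1).+1 = k by lia.
    have e2 : (k + m - 2 + 2 = k + m)%N by lia.
    have e3 : (k + m - 2 * 1 = k + m - 2)%N by lia.
    by rewrite e1 e2 in h; rewrite e3.
  have h := @step_UV p m (k - i.+2)%N (k + m - 2 * i.+2)%N hp hm ltac:(lia) ltac:(lia) ltac:(lia).
  have e1 : (k - i.+2).+1 = (k - i.+1)%N by lia.
  have e2 : (k + m - 2 * i.+2 + 2 = k + m - 2 * i.+1)%N by lia.
  rewrite e1 e2 in h.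
  apply: le_trans h _.
  apply: le_trans (IH ltac:(lia)).
  rewrite -[X in _ <= X]mul1r; apply: ler_wpM2r.
    apply: mulr_ge0; apply: ltW; [exact: U_gt0 | apply: V_gt0; lia].
  rewrite lerBlDr lerDl invr_ge0; apply: mulr_ge0 => //; exact: ler0n.
have := H m.-1 ltac:(lia).
have e1 : (m.-1.+1 = m)%N by lia.
have e2 : (k + m - 2 * m = k - m)%N by lia.
by rewrite e1 e2.
Qed.

Lemma U_ge_nat p m k : (1 <= p)%N -> (1 <= m)%N -> (p <= k)%N ->
  (k ^ 3 * ((k - p)`!) ^ 2 <= k`! * (k + m)`!)%N.
Proof.
move=> hp hm hk.
have hk1 : (1 <= k)%N by lia.
have f1 : ((k - p)`! <= (k.-1)`!)%N by apply: leq_fact; lia.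
have f2 : (k`! = k * (k.-1)`!)%N by clear -hk1; case: k hk1 => [//|k' _]; rewrite factS.
have f3 : (k.+1`! <= (k + m)`!)%N by apply: leq_fact; lia.
have f4 : (k.+1`! = k.+1 * k`!)%N by rewrite factS.
have g1 : (k * (k - p)`! <= k`!)%N by rewrite f2 leq_mul2l f1 orbT.
have g2 : (k * k`! <= (k + m)`!)%N by apply: leq_trans f3; rewrite f4 leq_mul2r leqnSn orbT.
have g3 : (k * (k - p)`! * (k * (k - p)`!) <= k`! * k`!)%N by apply: leq_mul.
have g4 : (k * (k`! * k`!) <= k`! * (k + m)`!)%N.
  by rewrite mulnA (mulnC k) -mulnA leq_mul2l g2 orbT.
apply: leq_trans g4.
have -> : (k ^ 3 * (k - p)`! ^ 2 = k * (k * (k - p)`! * (k * (k - p)`!)))%N.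
  by ring.
by rewrite leq_mul2l g3 orbT.
Qed.

Lemma U_ge p m k : (1 <= p)%N -> (1 <= m)%N -> (p <= k)%N -> k%:R ^+ 3 <= U p m k.
Proof.
move=> hp hm hk.
have h := @U_ge_nat p m k hp hm hk.
rewrite /U ler_pdivlMr ?exprn_gt0 ?ltr0n ?fact_gt0 //.
rewrite -natrX -natrX -natrM ler_nat //.
Qed.

Lemma inv_le4 (a b : RR) : 0 < a -> 0 < b -> b <= 4 * a -> a^-1 <= 4 * b^-1.
Proof.
move=> ha hb h.
rewrite -(ler_pM2r (mulr_gt0 ha hb)).
have -> : a^-1 * (a * b) = b by field; apply: lt0r_neq0.
have -> : 4 * b^-1 * (a * b) = 4 * a by field; apply: lt0r_neq0.
done.
Qed.

Lemma V_shift m k : (1 <= m)%N -> (m <= k)%N -> V k <= 4 * V (k + m)%N.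
Proof.
move=> hm hk.
have hk1 : (1 <= k)%N by lia.
have hx := r4_gt0 k hk1.
have hy : 0 < r4 (k + m)%N by apply: r4_gt0; lia.
have hr : r4 (k + m)%N <= 2 * r4 k.
  rewrite leNgt; apply/negP => hlt.
  have h1 : (2 * r4 k) ^+ 4 < r4 (k + m)%N ^+ 4.
    by rewrite (ltrXn2r 4 _ hlt) //; apply: mulr_ge0 => //; apply: ltW.
  rewrite exprMn !r4_pow natrD in h1.
  have e16 : (2 : RR) ^+ 4 = 16 by ring.
  rewrite e16 in h1.
  have : (0 : RR) <= k%:R by exact: ler0n.
  have : (m%:R : RR) <= k%:R by rewrite ler_nat.
  lra.
have hmk : (m%:R : RR) <= k%:R by rewrite ler_nat.
have hkm : ((k + m)%N%:R : RR) <= 2 * k%:R by rewrite natrD; lra.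
have hk0 : (0 : RR) < k%:R by rewrite ltr0n.
rewrite /V; apply: inv_le4.
- by apply: mulr_gt0.
- by apply: mulr_gt0 => //; rewrite ltr0n; lia.
have : (k + m)%N%:R * r4 (k + m)%N <= (2 * k%:R) * (2 * r4 k) :> RR.
  exact: ler_pM (ler0n _ _) (r4_ge0 _) hkm hr.
lra.
Qed.

Lemma key_ineq p m k : (1 <= p)%N -> (1 <= m)%N -> (p + m + 300 <= k)%N ->
  ((1 + (8 * k%:R)^-1) / U p m k * U p m (k - m)%N) * V (k - m)%N
  + ((1 + 8 * k%:R) / U p m k) * V k <= V (k + m)%N.
Proof.
move=> hp hm hk.
have ch := @chain p m k hp hm ltac:(lia).
have hU3 := @U_ge p m k hp hm ltac:(lia).
have hsh := @V_shift m k hm ltac:(lia).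
have hK : (300 : RR) <= k%:R by rewrite ler_nat; lia.
set K : RR := k%:R in ch hU3 hK *.
set Uk := U p m k in ch hU3 *.
set Ukm := U p m (k - m)%N in ch *.
set w := V (k + m)%N in ch hsh *.
set vk := V k in hsh *.
set vkm := V (k - m)%N in ch *.
have hUk : 0 < Uk by apply: U_gt0.
have hw : 0 <= w by apply: ltW; apply: V_gt0; lia.
have hvk : 0 <= vk by apply: ltW; apply: V_gt0; lia.
have hK0 : 0 < K by lra.
have e1 : (1 + (8 * K)^-1) / Uk * Ukm * vkm = (1 + (8 * K)^-1) / Uk * (Ukm * vkm) by ring.
have c1 : 0 <= (1 + (8 * K)^-1) / Uk.
  apply: divr_ge0; last exact: ltW.
  have : 0 <= (8 * K)^-1 by rewrite invr_ge0; lra.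
  lra.
have t1 : (1 + (8 * K)^-1) / Uk * (Ukm * vkm)
    <= (1 + (8 * K)^-1) / Uk * ((1 - (4 * K)^-1) * (Uk * w)) by apply: ler_wpM2l.
have e2 : (1 + (8 * K)^-1) / Uk * ((1 - (4 * K)^-1) * (Uk * w))
    = (1 + (8 * K)^-1) * (1 - (4 * K)^-1) * w.
  by field; apply/andP; split; apply: lt0r_neq0 => //; lra.
have t2 : (1 + (8 * K)^-1) * (1 - (4 * K)^-1) <= 1 - (8 * K)^-1.
  have -> : (4 * K)^-1 = 2 * (8 * K)^-1 by field; apply: lt0r_neq0.
  have : 0 <= (8 * K)^-1 by rewrite invr_ge0; lra.
  nra.
have t3 : (1 + (8 * K)^-1) * (1 - (4 * K)^-1) * w <= (1 - (8 * K)^-1) * w.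
  by apply: ler_wpM2r.
have c2 : 0 <= (1 + 8 * K) / Uk by apply: divr_ge0; lra.
have t4 : (1 + 8 * K) / Uk * vk <= (1 + 8 * K) / Uk * (4 * w) by apply: ler_wpM2l.
have t5 : (1 + 8 * K) / Uk * 4 <= (8 * K)^-1.
  rewrite mulrAC ler_pdivrMr //.
  apply: le_trans (_ : _ <= (8 * K)^-1 * K ^+ 3) _; last first.
    by apply: ler_wpM2l; [rewrite invr_ge0; lra | ].
  rewrite ler_pdivlMl; last lra.
  have hK2 : 300 * K ^+ 2 <= K ^+ 3.
    rewrite (exprS K 2); apply: ler_wpM2r => //; exact: sqr_ge0.
  have hK2' : 0 <= K ^+ 2 by exact: sqr_ge0.
  have hKK : 300 * K <= K ^+ 2 by rewrite expr2; apply: ler_wpM2r; lra.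
  have : 8 * K * ((1 + 8 * K) * 4) = 32 * K + 256 * K ^+ 2 by ring.
  lra.
have t6 : (1 + 8 * K) / Uk * (4 * w) <= (8 * K)^-1 * w.
  by rewrite mulrA; apply: ler_wpM2r.
rewrite e1.
have E : w = (1 - (8 * K)^-1) * w + (8 * K)^-1 * w by ring.
rewrite [X in _ <= X]E.
apply: lerD.
  rewrite e2 in t1; exact: le_trans t1 t3.
exact: le_trans t4 t6.
Qed.

Section Aux.
Local Open Scope complex_scope.

Lemma sqmodE (a b : RR) : sqmod (a +i* b) = a ^+ 2 + b ^+ 2.
Proof. by []. Qed.

Lemma sqmod_ge0 z : 0 <= sqmod z.
Proof. by case: z => a b; rewrite sqmodE; apply: addr_ge0; apply: sqr_ge0. Qed.

Lemma sqmodM (z w : Cx) : sqmod (z * w) = sqmod z * sqmod w.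
Proof. case: z => a b; case: w => c d. rewrite /sqmod /=. ring. Qed.

Lemma sqmodD (z w : Cx) (d : RR) : 0 < d ->
  sqmod (z + w) <= (1 + d) * sqmod z + (1 + d^-1) * sqmod w.
Proof.
move=> hd; case: z => a b; case: w => c e; rewrite /sqmod /=.
have key : forall x y : RR, (x + y) ^+ 2 <= (1 + d) * x ^+ 2 + (1 + d^-1) * y ^+ 2.
  move=> x y.
  have h : 0 <= d^-1 * (d * x - y) ^+ 2 by apply: mulr_ge0; [rewrite invr_ge0 ltW | exact: sqr_ge0].
  have e1 : d^-1 * (d * x - y) ^+ 2 = d * x ^+ 2 - 2 * x * y + d^-1 * y ^+ 2.
    by field; apply: lt0r_neq0.
  rewrite e1 in h.
  have e2 : (x + y) ^+ 2 = x ^+ 2 + 2 * x * y + y ^+ 2 by ring.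
  rewrite e2; lra.
have := key a c; have := key b e; lra.
Qed.

Lemma sqmodN (z : Cx) : sqmod (- z) = sqmod z.
Proof. by case: z => a b; rewrite /sqmod /= !sqrrN. Qed.

Lemma sqmodR (r : RR) : sqmod (r%:C) = r ^+ 2.
Proof. by rewrite /sqmod /= expr0n addr0. Qed.

Lemma sqmod_i : sqmod 'i = 1.
Proof. by rewrite /sqmod /= expr0n add0r expr1n. Qed.

Lemma sqmod_mi : sqmod (- 'i) = 1.
Proof. by rewrite sqmodN sqmod_i. Qed.


Lemma hup_sq p m k : (p <= k)%N -> hup p m k ^+ 2 = U p m k.
Proof.
move=> hk; rewrite /hup hk /U expr_div_n sqr_sqrtr // ler0n //.
Qed.

Lemma hup_gt0 p m k : (p <= k)%N -> 0 < hup p m k.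
Proof.
move=> hk; rewrite /hup hk divr_gt0 // ?sqrtr_gt0 ltr0n ?muln_gt0 ?fact_gt0 //.
Qed.

Lemma hdown_eq p m k : (p + m <= k)%N -> hdown p m k = hup p m (k - m)%N.
Proof.
move=> hk; rewrite /hdown /hup hk.
have -> : (p <= k - m)%N by lia.
have -> : (k - m + m = k)%N by lia.
have -> : (k - p - m = k - m - p)%N by lia.
by rewrite mulnC.
Qed.

Lemma hdown0 p m k : (k < p + m)%N -> hdown p m k = 0.
Proof. by move=> hk; rewrite /hdown leqNgt hk. Qed.

Definition isrec p m (lam : Cx) (y : cseq) : Prop :=
  (forall k, (k < p)%N -> y k = 0) /\
  (forall k, (p <= k)%N ->
     (hup p m k)%:C * y (k + m)%N + (hdown p m k)%:C * y (k - m)%N = lam * y k).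

Lemma rec_step_ineq p m lam y k : (1 <= p)%N -> (1 <= m)%N -> sqmod lam = 1 ->
  isrec p m lam y -> (p + m <= k)%N ->
  sqmod (y (k + m)%N) <=
    ((1 + (8 * k%:R)^-1) / U p m k * U p m (k - m)%N) * sqmod (y (k - m)%N)
    + ((1 + 8 * k%:R) / U p m k) * sqmod (y k).
Proof.
move=> hp hm hlam [_ hr] hk.
have e := hr k ltac:(lia).
rewrite hdown_eq // in e.
set u := hup p m k in e; set d := hup p m (k - m)%N in e.
have hu : 0 < u by apply: hup_gt0; lia.
have e2 : u%:C * y (k + m)%N = lam * y k + (- d)%:C * y (k - m)%N.
  rewrite -e raddfN /= mulNr; ring.
have hK : (0 : RR) < k%:R by rewrite ltr0n; lia.
have hd : (0 : RR) < (8 * k%:R)^-1 by rewrite invr_gt0; lra.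
have i1 := @sqmodD ((- d)%:C * y (k - m)%N) (lam * y k) _ hd.
rewrite addrC -e2 !sqmodM !sqmodR hlam mul1r sqrrN invrK in i1.
have hU : u ^+ 2 = U p m k by apply: hup_sq; lia.
have hUd : d ^+ 2 = U p m (k - m)%N by apply: hup_sq; lia.
rewrite hU hUd in i1.
have hUk : 0 < U p m k by apply: U_gt0.
rewrite -(ler_pM2l hUk).
have -> : U p m k * ((1 + (8 * k%:R)^-1) / U p m k * U p m (k - m)%N * sqmod (y (k - m)%N) +
   (1 + 8 * k%:R) / U p m k * sqmod (y k))
   = (1 + 8 * k%:R) * sqmod (y k) + (1 + (8 * k%:R)^-1) * (U p m (k - m)%N * sqmod (y (k - m)%N)).
  by field; rewrite (lt0r_neq0 hK) (lt0r_neq0 hUk).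
lra.
Qed.

Lemma rec_l2 p m lam y : (1 <= p)%N -> (1 <= m)%N -> sqmod lam = 1 ->
  isrec p m lam y -> in_l2 y.
Proof.
move=> hp hm hlam hy.
pose c n := sqmod (y n).
have hc : forall n, 0 <= c n by move=> n; exact: sqmod_ge0.
have hW : forall n, (p + 300 <= n)%N -> 0 < V n by move=> n hn; apply: V_gt0; lia.
have H : forall n, (p + 300 + 2 * m <= n)%N -> exists a b : RR, 0 <= a /\ 0 <= b /\
      c n <= a * c (n - 2 * m)%N + b * c (n - m)%N /\
      a * V (n - 2 * m)%N + b * V (n - m)%N <= V n.
  move=> n hn.
  set k := (n - m)%N.
  have e1 : n = (k + m)%N by rewrite /k; lia.
  have e2 : (n - 2 * m = k - m)%N by rewrite /k; lia.
  have hUk : 0 < U p m k by apply: U_gt0.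
  have hK : (0 : RR) <= k%:R by apply: ler0n.
  exists ((1 + (8 * k%:R)^-1) / U p m k * U p m (k - m)%N), ((1 + 8 * k%:R) / U p m k).
  split.
    apply: mulr_ge0; last exact/ltW/U_gt0.
    apply: divr_ge0; last exact: ltW.
    have : 0 <= (8 * k%:R : RR)^-1 by rewrite invr_ge0; lra.
    lra.
  split; first by apply: divr_ge0; [lra | exact: ltW].
  rewrite e2 e1.
  split.
    by apply: (@rec_step_ineq p m lam) => //; rewrite /k; lia.
  by apply: key_ineq => //; rewrite /k; lia.
have [C [hC0 hCb]] := @compare c V m (p + 300)%N hm hc hW H.
rewrite /in_l2.
exact: (@summable_cmp c C (p + 300)%N hc ltac:(lia) hC0 hCb).
Qed.


Lemma sum_zero_suffix (F : nat -> Cx) a b : (a <= b)%N -> (forall k, (a <= k)%N -> F k = 0) ->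
  \sum_(0 <= k < b) F k = \sum_(0 <= k < a) F k.
Proof.
move=> hab hF.
rewrite (big_cat_nat (leq0n a) hab) /=.
rewrite [X in _ + X]big1_seq ?addr0 //.
move=> k /andP [_]; rewrite mem_index_iota => /andP [h1 _]; exact: hF.
Qed.

Lemma sum_zero_prefix (F : nat -> Cx) a b : (a <= b)%N -> (forall k, (k < a)%N -> F k = 0) ->
  \sum_(a <= k < b) F k = \sum_(0 <= k < b) F k.
Proof.
move=> hab hF.
rewrite (big_cat_nat (leq0n a) hab) /=.
rewrite [X in _ = X + _]big1_seq ?add0r //.
move=> k /andP [_]; rewrite mem_index_iota => /andP [_ h1]; exact: hF.
Qed.

Lemma sum_shift (F : nat -> Cx) a L :
  \sum_(0 <= j < L) F (j + a)%N = \sum_(a <= k < a + L) F k.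
Proof.
symmetry; rewrite -{1}(add0n a) big_addn.
have -> : (a + L - a = L)%N by lia.
done.
Qed.

Lemma conjE' (a b : RR) : Num.conj (a +i* b) = a -i* b.
Proof. by []. Qed.
Lemma conjR' (r : RR) : Num.conj (r%:C) = r%:C.
Proof. by rewrite conjE' oppr0. Qed.

Lemma conjRM (r : RR) (z : Cx) : Num.conj (r%:C * z) = r%:C * Num.conj z.
Proof. rewrite rmorphM; congr (_ * _); exact: conjR'. Qed.

Lemma conjD' (a b : Cx) : Num.conj (a + b) = Num.conj a + Num.conj b.
Proof. exact: rmorphD. Qed.

Lemma fdotE N (u v : cseq) : fdot N u v = \sum_(0 <= k < N) u k * Num.conj (v k).
Proof. by rewrite /fdot big_mkord. Qed.

Lemma fdot_heun p m N x y : poly_Bp p N x ->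
  fdot (N + m)%N (Heun p m x) y =
  \sum_(0 <= k < N) x k * Num.conj ((hup p m k)%:C * y (k + m)%N + (hdown p m k)%:C * y (k - m)%N).
Proof.
move=> [hx0 hxN].
rewrite fdotE.
under eq_bigr => j _ do rewrite /Heun mulrDl.
rewrite big_split /=.
under [RHS]eq_bigr => k _ do rewrite conjD' !conjRM mulrDr.
rewrite [RHS]big_split /=.
congr (_ + _).
  rewrite -(@sum_zero_prefix _ m); last 2 first.
  - lia.
  - by move=> k hk; rewrite leqNgt hk /= mul0r.
  rewrite addnC -sum_shift.
  apply: eq_bigr => j _.
  have -> : (m <= j + m)%N by lia.
  have -> : (j + m - m = j)%N by lia.
  by rewrite mulrCA mulrA.
pose G k := (hdown p m k)%:C * x k * Num.conj (y (k - m)%N).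
transitivity (\sum_(0 <= j < N + m) G (j + m)%N).
  apply: eq_bigr => j _; rewrite /G.
  by have -> : (j + m - m = j)%N by lia.
rewrite sum_shift.
rewrite (@sum_zero_prefix G m); last 2 first.
- lia.
- by move=> k hk; rewrite /G hdown0 ?mul0r //; lia.
rewrite (@sum_zero_suffix G N); last 2 first.
- lia.
- by move=> k hk; rewrite /G hxN // mulr0 mul0r.
apply: eq_bigr => k _; rewrite /G.
by rewrite mulrCA mulrA.
Qed.

Lemma sum_delta (F : nat -> Cx) N k : (k < N)%N ->
  \sum_(0 <= j < N) (if j == k then 1 else 0) * F j = F k.
Proof.
move=> hk.
rewrite (@sum_zero_suffix _ k.+1) //; last first.
  move=> j hj; have -> : (j == k) = false by apply/eqP; lia.
  by rewrite mul0r.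
rewrite big_nat_recr //= eqxx mul1r big1_seq ?add0r //.
move=> j /andP [_]; rewrite mem_index_iota => /andP [_ hj].
have -> : (j == k) = false by apply/eqP; lia.
by rewrite mul0r.
Qed.

Lemma eig_to_rec p m lam y : adj_eigenspace p m lam y -> isrec p m lam y.
Proof.
move=> [[hl2 hz] [hz2 H]].
split => // k hk.
pose x := fun j : nat => if j == k then (1 : Cx) else 0.
have hx : poly_Bp p k.+1 x.
  split => j hj; rewrite /x; have -> : (j == k) = false by apply/eqP; lia.
  done. done.
have := H k.+1 x hx.
rewrite fdot_heun // fdotE sum_delta // sum_delta; last lia.
move/(congr1 Num.conj); rewrite !conjCK.
done.
Qed.

Lemma rec_to_eig p m lam y : (1 <= p)%N -> (1 <= m)%N -> sqmod lam = 1 ->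
  isrec p m lam y -> adj_eigenspace p m lam y.
Proof.
move=> hp hm hlam hy.
have hl2 := @rec_l2 p m lam y hp hm hlam hy.
case: hy => hz hr.
split; first by split.
split.
  split; last by move=> k hk; rewrite /= hz // mulr0.
  rewrite /in_l2.
  have e : (fun k => sqmod (lam * y k)) = (fun k => sqmod (y k)).
    by apply: funext => k; rewrite sqmodM hlam mul1r.
  by rewrite e.
move=> N x hx.
rewrite fdot_heun // fdotE.
rewrite [RHS](@sum_zero_suffix _ N); last 2 first.
- lia.
- by move=> k hk; case: hx => _ h; rewrite h // mul0r.
apply: eq_bigr => k _.
case: (ltnP k p) => hk.
  by case: hx => h _; rewrite h // !mul0r.
by rewrite hr.
Qed.


Fixpoint build p m (lam : Cx) (c : nat -> Cx) (t : nat) : cseq :=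
  match t with
  | 0 => fun n => if (p <= n < p + m)%N then c (n - p)%N else 0
  | t'.+1 => fun n => if n == (p + m + t')%N then
        ((hup p m (p + t')%N)^-1)%:C *
          (lam * build p m lam c t' (p + t')%N
           - (hdown p m (p + t')%N)%:C * build p m lam c t' (p + t' - m)%N)
      else build p m lam c t' n
  end.

Lemma build_stable p m lam c d t n : (n < p + m + t)%N ->
  build p m lam c (t + d) n = build p m lam c t n.
Proof.
move=> hn; elim: d => [|d IH]; first by rewrite addn0.
rewrite addnS /=.
have -> : (n == p + m + (t + d))%N = false by apply/eqP; lia.
exact: IH.
Qed.

Definition sol p m lam c : cseq := fun n => build p m lam c n.+1 n.

Lemma sol_eq p m lam c T n : (n < p + m + T)%N -> sol p m lam c n = build p m lam c T n.
Proof.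
move=> hn.
set t0 := minn T n.+1.
have h0 : (n < p + m + t0)%N by rewrite /t0; lia.
rewrite /sol.
have -> : n.+1 = (t0 + (n.+1 - t0))%N by rewrite /t0; lia.
rewrite build_stable //.
have -> : T = (t0 + (T - t0))%N by rewrite /t0; lia.
by rewrite build_stable.
Qed.

Lemma realC_inv (u : RR) : u != 0 -> u%:C * (u^-1)%:C = 1.
Proof. move=> hu; by rewrite -rmorphM mulfV. Qed.

Lemma sol_isrec p m lam c : (1 <= m)%N -> isrec p m lam (sol p m lam c).
Proof.
move=> hm.
split.
  move=> k hk; rewrite (@sol_eq _ _ _ _ 0) /=; last lia.
  by have -> : (p <= k < p + m)%N = false by apply/negbTE; lia.
move=> k hk.
rewrite (@sol_eq p m lam c (k - p).+1 (k + m)%N); last lia.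
rewrite /=.
have -> : ((k + m)%N == (p + m + (k - p))%N) by apply/eqP; lia.
have e1 : (p + (k - p) = k)%N by lia.
rewrite e1.
rewrite -(@sol_eq p m lam c (k - p) k); last lia.
rewrite -(@sol_eq p m lam c (k - p) (k - m)%N); last lia.
rewrite mulrA realC_inv ?mul1r; last by apply: lt0r_neq0; apply: hup_gt0.
by rewrite subrK.
Qed.

Lemma sol_init p m lam c i : (i < m)%N -> sol p m lam c (p + i)%N = c i.
Proof.
move=> hi; rewrite (@sol_eq _ _ _ _ 0) /=; last lia.
have -> : (p <= p + i < p + m)%N by lia.
by have -> : (p + i - p = i)%N by lia.
Qed.

Lemma realC_neq0 (u : RR) : u != 0 -> u%:C != 0 :> Cx.
Proof.
move=> hu; apply/eqP => h.
have := congr1 (@complex.Re _) h; rewrite /= => h'.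
by move/eqP: hu; apply.
Qed.

Lemma rec_unique p m lam y z : (1 <= m)%N -> isrec p m lam y -> isrec p m lam z ->
  (forall i, (i < m)%N -> y (p + i)%N = z (p + i)%N) -> forall n, y n = z n.
Proof.
move=> hm [hy0 hyr] [hz0 hzr] hi.
suff H : forall N n, (n < N)%N -> y n = z n by move=> n; apply: (H n.+1).
elim=> [//|N IH] n hn.
case: (ltnP n p) => h1; first by rewrite hy0 ?hz0.
case: (ltnP n (p + m)) => h2.
  have -> : n = (p + (n - p))%N by lia.
  apply: hi; lia.
set k := (n - m)%N.
have ek : n = (k + m)%N by rewrite /k; lia.
have hk : (p <= k)%N by rewrite /k; lia.
have ey := hyr k hk; have ez := hzr k hk.
have i1 : y k = z k by apply: IH; rewrite /k; lia.
have i2 : y (k - m)%N = z (k - m)%N by apply: IH; rewrite /k; lia.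
rewrite i1 i2 -ez in ey.
move/addIr: ey => ey.
have hu : (hup p m k)%:C != 0 :> Cx.
  by apply: realC_neq0; apply: lt0r_neq0; apply: hup_gt0.
rewrite ek; exact: (mulfI hu ey).
Qed.

Lemma rec_lincomb p m lam d (c : 'I_d -> Cx) (v : 'I_d -> cseq) :
  (forall i, isrec p m lam (v i)) -> isrec p m lam (fun k => \sum_(i < d) c i * v i k).
Proof.
move=> hv; split.
  move=> k hk; apply: big1 => i _; by case: (hv i) => h _; rewrite h // mulr0.
move=> k hk.
rewrite !mulr_sumr -big_split /=; apply: eq_bigr => i _.
case: (hv i) => _ h; have := h k hk => e.
by rewrite mulrCA [X in _ + X]mulrCA -mulrDr e mulrCA.
Qed.

Lemma dim_lam p m lam : (1 <= p)%N -> (1 <= m)%N -> sqmod lam = 1 ->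
  has_dim (adj_eigenspace p m lam) m.
Proof.
move=> hp hm hlam.
pose v := fun i : 'I_m => sol p m lam (fun j => if j == (i : nat) then 1 else 0).
have hvr : forall i, isrec p m lam (v i) by move=> i; apply: sol_isrec.
have hvi : forall i j : 'I_m, v j (p + i)%N = if i == j then 1 else 0.
  by move=> i j; rewrite /v sol_init.
exists v; split; [|split].
- by move=> i; apply: rec_to_eig => //; exact: hvr.
- move=> c hc i.
  have := hc (p + i)%N.
  rewrite (bigD1 i) //= hvi eqxx mulr1 big1 ?addr0 //.
  move=> j hj; rewrite hvi.
  have -> : (i == j) = false by rewrite eq_sym; exact: negbTE.
  by rewrite mulr0.
- move=> y hy.
  have hr := @eig_to_rec p m lam y hy.
  exists (fun i : 'I_m => y (p + i)%N) => k.
  apply: (@rec_unique p m lam y (fun k => \sum_(i < m) y (p + i)%N * v i k) hm hr).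
    exact: rec_lincomb.
  move=> i hi.
  rewrite (bigD1 (Ordinal hi)) //= (hvi (Ordinal hi)) eqxx mulr1 big1 ?addr0 //.
  move=> j hj; rewrite (hvi (Ordinal hi)).
  have -> : (Ordinal hi == j) = false by rewrite eq_sym; exact: negbTE.
  by rewrite mulr0.
Qed.

End Aux.

Theorem theorem3p5 (p m : nat) (hp : (1 <= p)%N) (hm : (1 <= m)%N)
  (hpm : 1 < p%:R + m%:R / 2 :> Rdefinitions.R) :
  n_plus p m m /\ n_minus p m m.
Proof.
split.
- exact: (@dim_lam p m _ hp hm sqmod_i).
- exact: (@dim_lam p m _ hp hm sqmod_mi).
Qed.
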